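(* Let $s\in\mathbb{N}$ and let $X\subseteq\mathbb{C}(\mathbb{Z})$ be the space of sequences $x_t=q(t)$, $q$ a complex polynomial of degree at most $s-1$. For each $m\in\mathbb{N}$ let $\phi^{*,m}_+\in\mathbb{C}^+_m(\mathbb{Z})$ be a reproducing filter for $X$ of minimal $\ell_2$-norm among all reproducing filters for $X$ in $\mathbb{C}^+_m(\mathbb{Z})$. Then $$\lim_{m\to\infty}m\|\phi^{*,m}_+\|_2^2=s^2.$$
   Context: $\mathbb{C}(\mathbb{Z})$: two-sided complex sequences; $\mathbb{C}^+_m(\mathbb{Z})$: sequences with $x_t=0$ for $t\notin\{0,\dots,m\}$. Convolution $(u*v)_t=\sum_\tau u_\tau v_{t-\tau}$; $\phi$ is reproducing for $X$ if $\phi*x=x$ for all $x\in X$. $\|\cdot\|_2$ is the $\ell_2$-norm. *)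

(* Defs.v *)
From HB Require Import structures.
From mathcomp Require Import all_boot all_order all_algebra.
From mathcomp Require Import complex.
From mathcomp Require Import all_classical all_reals all_analysis.
Set Implicit Arguments. Unset Strict Implicit. Unset Printing Implicit Defensive.
Import Order.TTheory GRing.Theory Num.Theory.
Local Open Scope ring_scope.

Section Defs.
Variable R : rcfType.
Local Notation C := R[i].

Definition seqC := int -> C.

Definition in_Cplus (m : nat) (x : seqC) : Prop :=
  forall t : int, (t < 0 \/ m%:Z < t) -> x t = 0.

(* Convolution (phi * x)_t = sum_{tau in Z} phi_tau x_{t - tau}, for phi in
   C^+_m(Z): the sum reduces to tau = 0..m. *)
Definition convp (m : nat) (phi x : seqC) : seqC :=
  fun t => \sum_(tau < m.+1) phi (tau%:Z) * x (t - tau%:Z).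

Definition polyseqZ (q : {poly C}) : seqC := fun t => q.[t%:~R].

(* X = { t |-> q(t) : deg q <= s - 1 }  (size q <= s) *)
Definition in_polyX (s : nat) (x : seqC) : Prop :=
  exists q : {poly C}, (size q <= s)%N /\ x = polyseqZ q.

Definition reproducing (s m : nat) (phi : seqC) : Prop :=
  forall x, in_polyX s x -> convp m phi x = x.

Definition l2sq (m : nat) (phi : seqC) : R :=
  \sum_(t < m.+1) ((complex.Re (phi t%:Z)) ^+ 2 + (complex.Im (phi t%:Z)) ^+ 2).

Definition min_reproducing (s m : nat) (phi : seqC) : Prop :=
  [/\ in_Cplus m phi, reproducing s m phi &
      forall psi, in_Cplus m psi -> reproducing s m psi -> l2sq m phi <= l2sq m psi].
End Defs.

(* Main.v *)
Require Import Defs.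
From HB Require Import structures.
From mathcomp Require Import all_boot all_order all_algebra.
From mathcomp Require Import complex.
From mathcomp Require Import all_classical all_reals all_analysis.
From mathcomp Require Import zify ring lra.
Import Order.TTheory GRing.Theory Num.Theory.
Import numFieldNormedType.Exports.
Set Implicit Arguments. Unset Strict Implicit. Unset Printing Implicit Defensive.
Local Open Scope classical_set_scope.
Lemma sum_binC (j i m : nat) :
  \sum_(tau < m.+1) 'C(tau + j, j) * 'C(m - tau, i) = 'C(m + j.+1, i + j.+1).
Proof.
elim: m i => [|m IH] i.
  rewrite big_ord1 /= add0n binn mul1n sub0n add0n.
  case: i => [|i]; first by rewrite bin0 binn.
  by rewrite bin0n bin_small //; lia.
rewrite big_ord_recr /= subnn.
case: i => [|i].
  have H0 := IH 0.
  rewrite (eq_bigr (fun t : 'I_m.+1 => 'C(t + j, j))) => [|t _]; last by rewrite bin0 muln1.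
  rewrite (eq_bigr (fun t : 'I_m.+1 => 'C(t + j, j))) in H0 => [|t _]; last by rewrite bin0 muln1.
  by rewrite H0 bin0 muln1 !add0n [in RHS]addSn binS -addSnnS.
rewrite (@bin_small 0) // muln0 addn0.
have -> : \sum_(i0 < m.+1) 'C(i0 + j, j) * 'C(m.+1 - i0, i.+1)
   = \sum_(i0 < m.+1) 'C(i0 + j, j) * 'C(m - i0, i.+1)
     + \sum_(i0 < m.+1) 'C(i0 + j, j) * 'C(m - i0, i).
  rewrite -big_split /=; apply: eq_bigr => k _.
  by rewrite subSn ?binS ?mulnDr // -ltnS.
by rewrite IH IH !addSn binS.
Qed.

Lemma ffactD (n a b : nat) : n ^_ (a + b) = n ^_ a * (n - a) ^_ b.
Proof.
elim: b => [|b IH]; first by rewrite addn0 ffactn0 muln1.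
by rewrite addnS !ffactnSr IH subnDA mulnA.
Qed.

Lemma binM (n a b : nat) : 'C(n, a + b) * 'C(a + b, a) = 'C(n, a) * 'C(n - a, b).
Proof.
apply/eqP; rewrite -(eqn_pmul2r (_ : 0 < a`! * b`!)) ?muln_gt0 ?fact_gt0 //.
have h := bin_fact (leq_addr b a); rewrite addKn in h.
have e1 : 'C(n, a + b) * 'C(a + b, a) * (a`! * b`!) = n ^_ (a + b).
  by rewrite -mulnA h bin_ffact.
have e2 : 'C(n, a) * 'C(n - a, b) * (a`! * b`!) = n ^_ a * (n - a) ^_ b.
  by rewrite mulnACA !bin_ffact.
by rewrite e1 e2 ffactD.
Qed.

Local Open Scope ring_scope.

Section FF.
Variable F : numFieldType.

Definition ffR (x : F) n := \prod_(l < n) (x - l%:R).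

Lemma bump0' i : bump 0 i = i.+1.
Proof. by rewrite /bump leq0n. Qed.

Lemma ffRS x n : ffR x n.+1 = ffR x n * (x - n%:R).
Proof. by rewrite /ffR big_ord_recr. Qed.

Lemma ffR0 x : ffR x 0 = 1.
Proof. by rewrite /ffR big_ord0. Qed.

Lemma ffR_nat n k : ffR n%:R k = (n ^_ k)%:R.
Proof.
elim: k => [|k IH]; first by rewrite ffR0 ffactn0.
rewrite ffRS IH ffactnSr.
case: (leqP k n) => hk; first by rewrite natrM natrB.
by rewrite ffact_small // mul0n mul0r.
Qed.

Lemma ffR_neg s j : ffR (- s%:R) j.+1 = (-1) ^+ j.+1 * ((s + j) ^_ j.+1)%:R.
Proof.
elim: j => [|j IH]; first by rewrite ffRS ffR0 addn0 ffactn1 subr0 mul1r expr1 mulN1r.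
rewrite ffRS IH addnS ffactSS natrM exprS.
rewrite -addnS natrD !exprS.
move: ((-1) ^+ j) ((s + j) ^_ j.+1)%:R => t u; ring.
Qed.

Lemma ffR_vandermonde x y n :
  ffR (x + y) n = \sum_(k < n.+1) 'C(n, k)%:R * ffR x k * ffR y (n - k).
Proof.
elim: n => [|n IH].
  by rewrite big_ord1 /= !ffR0 bin0 mul1r mulr1.
rewrite ffRS IH big_distrl /=.
have E : forall k : 'I_n.+1, 'C(n, k)%:R * ffR x k * ffR y (n - k) * (x + y - n%:R)
   = 'C(n, k)%:R * ffR x k.+1 * ffR y (n - k) + 'C(n, k)%:R * ffR x k * ffR y (n.+1 - k).
  move=> k; have hk : (k <= n)%N by rewrite -ltnS.
  rewrite !ffRS (subSn hk) ffRS (natrB _ hk); ring.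
rewrite (eq_bigr _ (fun k _ => E k)) big_split /=.
rewrite [in RHS]big_ord_recl /= bin0 ffR0 subn0 mul1r.
under [in RHS]eq_bigr do rewrite bump0' binS natrD !mulrDl.
rewrite [in RHS]big_split /=.
have HB : \sum_(i < n.+1) 'C(n, i)%:R * ffR x i * ffR y (n.+1 - i)
   = ffR y n.+1 + \sum_(i < n.+1) 'C(n, i.+1)%:R * ffR x i.+1 * ffR y (n.+1 - i.+1).
  rewrite big_ord_recl /= bin0 ffR0 subn0 !mul1r; congr (_ + _).
  rewrite [in RHS]big_ord_recr /= bin_small // mul0r mul0r addr0.
  by apply: eq_bigr => i _; rewrite bump0'.
have HA : \sum_(i < n.+1) 'C(n, i)%:R * ffR x i.+1 * ffR y (n - i)
   = \sum_(i < n.+1) 'C(n, i)%:R * ffR x i.+1 * ffR y (n.+1 - i.+1).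
  by apply: eq_bigr => i _; rewrite subSS.
rewrite HB HA; ring.
Qed.

Lemma S_nat s i j : (j < s)%N ->
  ((s + j) ^_ j.+1 * (i + s) ^_ (s - j.+1) * 'C(j.+1 + i, j.+1)
   = 'C(s + j, j.+1) * (i + s) ^_ s)%N.
Proof.
move=> hj.
have e : (i + s - (s - j.+1) = j.+1 + i)%N by lia.
have -> : ((i + s) ^_ s = (i + s) ^_ (s - j.+1) * (j.+1 + i) ^_ j.+1)%N.
  by rewrite -e -ffactD subnK.
rewrite -!bin_ffact; ring.
Qed.

Lemma S_identity s i : (i < s)%N ->
  \sum_(j < s) (-1) ^+ j * ('C(s, j.+1) * 'C(s + j, j.+1))%:R / ('C(j.+1 + i, j.+1))%:R = 1 :> F.
Proof.
move=> his.
have V := ffR_vandermonde (- s%:R) (i + s)%:R s.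
rewrite (_ : - s%:R + (i + s)%:R = i%:R) in V; last by rewrite natrD; ring.
rewrite ffR_nat ffact_small // big_ord_recl /= bin0 ffR0 subn0 !mul1r ffR_nat in V.
set A := ((i + s) ^_ s)%:R : F in V.
have Anz : A != 0 by rewrite pnatr_eq0 -lt0n ffact_gt0 leq_addl.
set S := \sum_(j < s) _.
have HT : forall j : 'I_s, 'C(s, bump 0 j)%:R * ffR (- s%:R) (bump 0 j) * ffR (i + s)%:R (s - bump 0 j)
   = - (A * ((-1) ^+ j * ('C(s, j.+1) * 'C(s + j, j.+1))%:R / ('C(j.+1 + i, j.+1))%:R)).
  move=> j; rewrite bump0' ffR_neg ffR_nat.
  have Dnz : ('C(j.+1 + i, j.+1))%:R != 0 :> F by rewrite pnatr_eq0 -lt0n bin_gt0 leq_addr.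
  have N' : ((s + j) ^_ j.+1)%:R * ((i + s) ^_ (s - j.+1))%:R = ('C(s + j, j.+1))%:R * A / ('C(j.+1 + i, j.+1))%:R :> F.
    by apply: (mulIf Dnz); rewrite mulfVK // -!natrM S_nat.
  transitivity ('C(s, j.+1)%:R * (- (-1) ^+ j) * (((s + j) ^_ j.+1)%:R * ((i + s) ^_ (s - j.+1))%:R) : F).
    by rewrite exprS; ring.
  rewrite N' natrM; field; exact: Dnz.
rewrite (eq_bigr _ (fun j _ => HT j)) sumrN -mulr_sumr -/S in V.
apply: (mulfI Anz); rewrite mulr1; apply/eqP; rewrite -subr_eq0 -opprB oppr_eq0; apply/eqP.
by rewrite -V.
Qed.

Definition wF s m j : F :=
  (-1) ^+ j * ('C(s, j.+1) * 'C(s + j, j.+1))%:R / ('C(m + j.+1, j.+1))%:R.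
Definition psiF s m (tau : nat) : F := \sum_(j < s) wF s m j * ('C(tau + j, j))%:R.

Lemma K_identity s m n : (n < s)%N ->
  \sum_(tau < m.+1) psiF s m tau * ('C(m - tau, n))%:R = ('C(m, n))%:R.
Proof.
move=> hns.
rewrite /psiF.
under eq_bigr do rewrite mulr_suml.
rewrite exchange_big /=.
under eq_bigr => j _.
  rewrite (eq_bigr (fun tau : 'I_m.+1 => wF s m j * ('C(tau + j, j) * 'C(m - tau, n))%:R)); last by move=> t _; rewrite natrM mulrA.
  rewrite -mulr_sumr -natr_sum sum_binC.
  over.
transitivity (('C(m, n))%:R * \sum_(j < s) (-1) ^+ j * ('C(s, j.+1) * 'C(s + j, j.+1))%:R / ('C(j.+1 + n, j.+1))%:R : F); last by rewrite S_identity ?mulr1.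
rewrite mulr_sumr.
apply: eq_bigr => j _.
have Dnz : ('C(j.+1 + n, j.+1))%:R != 0 :> F by rewrite pnatr_eq0 -lt0n bin_gt0 leq_addr.
have Mnz : ('C(m + j.+1, j.+1))%:R != 0 :> F by rewrite pnatr_eq0 -lt0n bin_gt0 leq_addl.
have Nt : ('C(m + j.+1, n + j.+1))%:R = ('C(m + j.+1, j.+1))%:R * ('C(m, n))%:R / ('C(j.+1 + n, j.+1))%:R :> F.
  by apply: (mulIf Dnz); rewrite mulfVK // -!natrM (addnC n) binM addnK.
rewrite /wF Nt; field.
by rewrite Dnz Mnz.
Qed.

Definition Tp m n : {poly F} := \prod_(0 <= l < n) ('X - (m%:R - l%:R)%:P).

Lemma Tp_eval m n tau : (tau <= m)%N ->
  (Tp m n).[tau%:R] = (-1) ^+ n * ('C(m - tau, n) * n`!)%:R.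
Proof.
move=> h; rewrite /Tp horner_prod big_mkord.
rewrite (eq_bigr (fun l : 'I_n => -1 * ((m - tau)%:R - l%:R))) => [|l _]; last first.
  by rewrite hornerXsubC natrB //; ring.
rewrite big_split /= prodr_const card_ord.
have -> : \prod_(i < n) ((m - tau)%:R - i%:R) = ffR (m - tau)%:R n :> F by [].
by rewrite ffR_nat bin_ffact.
Qed.

Lemma Tp_eval0 m n : (Tp m n).[0] = (-1) ^+ n * ('C(m, n) * n`!)%:R.
Proof. by have := @Tp_eval m n 0 (leq0n m); rewrite subn0 mulr0n. Qed.

Lemma Tp_size m n : size (Tp m n) = n.+1.
Proof. by rewrite /Tp size_prod_XsubC size_iota subn0. Qed.

Lemma Tp_coef m n : (Tp m n)`_n = 1.
Proof.
have := lead_coef_prod_XsubC (index_iota 0 n) predT (fun l => m%:R - l%:R : F).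
by rewrite lead_coefE -/(Tp m n) Tp_size.
Qed.

Lemma size_le_coef (p : {poly F}) n : (size p <= n.+1)%N -> p`_n = 0 -> (size p <= n)%N.
Proof.
move=> h1 h2; rewrite leqNgt; apply/negP => h3.
have Hs : size p = n.+1 by apply/eqP; rewrite eqn_leq h1 h3.
have : lead_coef p = 0 by rewrite lead_coefE Hs.
move/eqP; rewrite lead_coef_eq0 => /eqP p0.
by rewrite p0 size_poly0 in Hs.
Qed.

Lemma L_gen s m n : (n <= s)%N -> forall r : {poly F}, (size r <= n)%N ->
  \sum_(tau < m.+1) psiF s m tau * r.[tau%:R] = r.[0].
Proof.
elim: n => [|n IH] hns r hr.
  have r0 : r = 0 by apply/eqP; rewrite -size_poly_eq0 -leqn0.
  by rewrite r0 horner0 big1 // => t _; rewrite horner0 mulr0.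
set c := r`_n.
set r' := r - c *: Tp m n.
have hr' : (size r' <= n)%N.
  apply: size_le_coef; last by rewrite /r' coefB coefZ Tp_coef mulr1 subrr.
  apply: leq_trans (size_polyD _ _) _; rewrite geq_max hr size_polyN.
  by apply: leq_trans (size_scale_leq _ _) _; rewrite Tp_size.
have -> : r = r' + c *: Tp m n by rewrite subrK.
under eq_bigr do rewrite hornerD hornerZ mulrDr.
rewrite big_split /= IH ?(ltnW hns) // hornerD hornerZ.
congr (_ + _).
rewrite (eq_bigr (fun tau : 'I_m.+1 => c * ((-1) ^+ n * (n`!)%:R) * (psiF s m tau * ('C(m - tau, n))%:R))) => [|t _]; last first.
  by rewrite (@Tp_eval m n t (ltn_ord t)) natrM; ring.
by rewrite -mulr_sumr K_identity // Tp_eval0 natrM; ring.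
Qed.

Definition Bp j : {poly F} := \prod_(0 <= l < j) ('X - (- (l.+1)%:R)%:P).

Lemma prod_rising tau j : (\prod_(0 <= l < j) (tau + l.+1) = (tau + j) ^_ j)%N.
Proof.
elim: j => [|j IH]; first by rewrite big_nil ffactn0.
by rewrite big_nat_recr //= IH addnS ffactSS mulnC.
Qed.

Lemma Bp_eval tau j : (Bp j).[tau%:R] = ('C(tau + j, j) * j`!)%:R.
Proof.
rewrite /Bp horner_prod.
rewrite (eq_bigr (fun l => ((tau + l.+1)%N)%:R)) => [|l _]; last by rewrite hornerXsubC opprK natrD.
by rewrite -natr_prod prod_rising bin_ffact.
Qed.

Lemma Bp_size j : size (Bp j) = j.+1.
Proof. by rewrite /Bp size_prod_XsubC size_iota subn0. Qed.

Definition Ppsi s m : {poly F} := \sum_(j < s) (wF s m j / (j`!)%:R) *: Bp j.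

Lemma Ppsi_eval s m tau : (Ppsi s m).[tau%:R] = psiF s m tau.
Proof.
rewrite /Ppsi horner_sum /psiF; apply: eq_bigr => j _.
rewrite hornerZ Bp_eval natrM.
have fnz : (j`!)%:R != 0 :> F by rewrite pnatr_eq0 -lt0n fact_gt0.
by field.
Qed.

Lemma Ppsi_size s m : (size (Ppsi s m) <= s)%N.
Proof.
rewrite /Ppsi; apply: (big_ind (fun p : {poly F} => (size p <= s)%N)).
- by rewrite size_poly0.
- by move=> p q hp hq; apply: leq_trans (size_polyD _ _) _; rewrite geq_max hp hq.
- move=> j _; apply: leq_trans (size_scale_leq _ _) _.
  by rewrite Bp_size.
Qed.

Lemma psiF0 s m : psiF s m 0 = \sum_(j < s) wF s m j.
Proof. by apply: eq_bigr => j _; rewrite add0n binn mulr1. Qed.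

Lemma sum_sq s m : \sum_(tau < m.+1) psiF s m tau * psiF s m tau = psiF s m 0.
Proof.
have := L_gen m (leqnn s) (Ppsi_size s m).
under eq_bigr do rewrite Ppsi_eval.
by have := Ppsi_eval s m 0; rewrite mulr0n => ->.
Qed.
End FF.

Lemma binD_lower m j : (m.+2 * m.+1 <= 2 * 'C(m + j.+2, j.+2))%N.
Proof.
have e1 : (2 * 'C(m.+2, 2) = m.+2 * m.+1)%N by rewrite -(mul_bin_diag m.+2 1) bin1.
rewrite -e1 leq_mul2l /=.
have e2 : 'C(m + 2, 2) = 'C(m + 2, m).
  by have := bin_sub (leq_addr 2 m); rewrite addKn.
have e3 : 'C(m + j.+2, j.+2) = 'C(m + j.+2, m).
  by have := bin_sub (leq_addr j.+2 m); rewrite addKn.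
rewrite -addn2 e2 e3 leq_bin2l //.
by rewrite leq_add2l.
Qed.

Lemma wF_bound (R : realFieldType) s m j :
  m%:R * `|wF R s m j.+1| <= ('C(s, j.+2) * 'C(s + j.+1, j.+2))%:R * (2 / (m.+1)%:R).
Proof.
rewrite /wF -mulrA normrMsign ger0_norm ?divr_ge0 ?ler0n //.
rewrite mulrCA ler_wpM2l ?ler0n //.
have Dp : 0 < ('C(m + j.+2, j.+2))%:R :> R by rewrite ltr0n bin_gt0 leq_addl.
rewrite ler_pdivrMr // mulrAC ler_pdivlMr ?ltr0n //.
rewrite -!natrM ler_nat.
apply: leq_trans (binD_lower m j).
by rewrite leq_mul2r; apply/orP; right; rewrite -addn2 leq_addr.
Qed.

Definition Kc s := (s ^ 2 + 2 * \sum_(j < s) 'C(s, j.+1) * 'C(s + j, j.+1))%N.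

Lemma u_bound (R : realFieldType) s m :
  `|(s ^ 2)%N%:R - m%:R * \sum_(j < s) wF R s m j| <= (Kc s)%:R / (m.+1)%:R.
Proof.
case: s => [|s].
  by rewrite /Kc !big_ord0 /= mulr0 subr0 normr0 mul0r.
rewrite /Kc !big_ord_recl.
set T := \sum_(i < s) wF R s.+1 m (bump 0 i).
set Cs := (\sum_(i < s) _)%N.
have w0 : wF R s.+1 m (@ord0 s) = (s.+1 ^ 2)%N%:R / (m.+1)%:R.
  by rewrite /wF /= expr0 mul1r !bin1 addn0 addn1 -mulnn.
have mp : 0 < (m.+1)%:R :> R by rewrite ltr0n.
have h1 : `|m%:R * T| <= 2 * Cs%:R / (m.+1)%:R.
  rewrite normrM ger0_norm ?ler0n //.
  have hn : `|T| <= \sum_(i < s) `|wF R s.+1 m (bump 0 i)| by apply: ler_norm_sum.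
  apply: le_trans (ler_wpM2l (ler0n R m) hn) _.
  rewrite mulr_sumr.
  under eq_bigr do rewrite bump0'.
  apply: le_trans.
    by apply: ler_sum => i _; apply: wF_bound.
  rewrite -mulr_suml /Cs natr_sum.
  rewrite (eq_bigr (fun i : 'I_s => ('C(s.+1, i.+2) * 'C(s.+1 + i.+1, i.+2))%:R)) => [|i _] //.
  by rewrite mulrCA mulrA.
rewrite w0.
have e : (s.+1 ^ 2)%N%:R - m%:R * ((s.+1 ^ 2)%N%:R / (m.+1)%:R + T)
   = (s.+1 ^ 2)%N%:R / (m.+1)%:R - m%:R * T :> R.
  rewrite -[(m.+1)%:R]natr1 in mp *; field; by rewrite gt_eqF.
rewrite e; apply: le_trans (ler_normB _ _) _.
rewrite ger0_norm ?divr_ge0 ?ler0n //.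
apply: le_trans (lerD (lexx _) h1) _.
rewrite -mulrDl ler_pM2r ?invr_gt0 //.
rewrite !natrD !natrM.
have : 0 <= ('C(s.+1, 1) * 'C(s.+1 + 0, 1))%:R :> R by rewrite ler0n.
rewrite natrM; lra.
Qed.

Section Cx.
Variable R : realType.
Local Notation C := R[i].

Lemma psiF_C s m tau : psiF C s m tau = ((psiF R s m tau)%:C)%C.
Proof.
rewrite /psiF rmorph_sum; apply: eq_bigr => j _.
rewrite /wF [RHS]rmorphM; congr (_ * _); last by rewrite rmorph_nat.
by rewrite fmorph_div [X in _ = X / _]rmorphM rmorphXn rmorphN1 !rmorph_nat natrM.
Qed.

Definition psiC s m : int -> C :=
  fun t => if (0 <= t) && (t <= m%:Z) then psiF C s m `|t|%N else 0.

Lemma psiC_nat s m (tau : 'I_m.+1) : psiC s m tau%:Z = psiF C s m tau.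
Proof.
have h : (tau <= m)%N := ltn_ord tau.
by rewrite /psiC le0z_nat lez_nat h.
Qed.

Lemma psiC_Cplus s m : in_Cplus m (psiC s m).
Proof.
move=> t ht; rewrite /psiC; case: ifP => // /andP [h1 h2].
by case: ht => ht; [rewrite ltNge h1 in ht | rewrite ltNge h2 in ht].
Qed.

Lemma size_comp_le2 (q p : {poly C}) : (size p <= 2)%N -> (size (q \Po p) <= size q)%N.
Proof.
move=> hp; have [->|qnz] := eqVneq q 0; first by rewrite comp_poly0 size_poly0.
apply: leq_trans (size_comp_poly_leq _ _) _.
have hq : (0 < size q)%N by rewrite size_poly_gt0.
have hp1 : ((size p).-1 <= 1)%N by move: hp; case: (size p) => [|[|[|k]]].
rewrite -[X in (_ <= X)%N](prednK hq) ltnS.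
by apply: leq_trans (leq_mul (leqnn _) hp1) _; rewrite muln1.
Qed.

Lemma psiC_repr s m : reproducing s m (psiC s m).
Proof.
move=> x [q [hq ->]]; apply: funext => t; rewrite /convp /polyseqZ.
under eq_bigr do rewrite psiC_nat.
set r := q \Po ((t%:~R)%:P - 'X).
have hr : (size r <= s)%N.
  apply: leq_trans (size_comp_le2 _ _) hq.
  apply: leq_trans (size_polyD _ _) _; rewrite geq_max size_polyN size_polyX andbT.
  by apply: leq_trans (size_polyC_leq1 _) _.
have E : forall tau : nat, q.[(t - tau%:Z)%:~R] = r.[tau%:R].
  by move=> tau; rewrite /r horner_comp !hornerE mulrzBr -pmulrn.
under eq_bigr do rewrite E.
by rewrite (L_gen m (leqnn s) hr) /r horner_comp !hornerE subr0.
Qed.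

Lemma l2sq_psiC s m : l2sq m (psiC s m) = \sum_(tau < m.+1) psiF R s m tau * psiF R s m tau.
Proof.
rewrite /l2sq; apply: eq_bigr => tau _; rewrite psiC_nat psiF_C /=.
by rewrite !expr2 mulr0 addr0.
Qed.

Lemma Re_sum n (f : 'I_n -> C) : complex.Re (\sum_(i < n) f i) = \sum_(i < n) complex.Re (f i).
Proof.
elim/big_rec2: _ => [//|i y1 y2 _ <-].
by case: (f i) => a b; case: y2.
Qed.

Lemma ReM (z : C) (x : R) : complex.Re (z * (x%:C)%C) = complex.Re z * x.
Proof. by case: z => a b /=; rewrite mulr0 subr0. Qed.

Lemma lower_id s m (phi : int -> C) : reproducing s m phi ->
  \sum_(tau < m.+1) complex.Re (phi tau%:Z) * psiF R s m tau = psiF R s m 0.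
Proof.
move=> hrep.
set q := Ppsi C s m \Po (- 'X).
have hq : (size q <= s)%N.
  apply: leq_trans (size_comp_le2 _ _) (Ppsi_size _ _ _).
  by rewrite size_polyN size_polyX.
have H := hrep (polyseqZ q) (ex_intro _ q (conj hq erefl)).
have := congr1 (fun f => f 0) H; rewrite /convp /polyseqZ /=.
have E : forall tau : nat, q.[(0 - tau%:Z)%:~R] = ((psiF R s m tau)%:C)%C.
  move=> tau; rewrite /q horner_comp !hornerE mulrNz -pmulrn opprK.
  by rewrite Ppsi_eval psiF_C.
under eq_bigr do rewrite E.
have E0 : q.[0%:~R] = ((psiF R s m 0)%:C)%C.
  rewrite /q horner_comp !hornerE mulr0z oppr0.
  by have := Ppsi_eval C s m 0; rewrite mulr0n => ->; rewrite psiF_C.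
rewrite E0 => /(congr1 (@complex.Re R)); rewrite Re_sum /= => <-.
by apply: eq_bigr => tau _; rewrite ReM.
Qed.

Lemma l2sq_eq s m (phi : int -> C) : min_reproducing s m phi ->
  l2sq m phi = \sum_(j < s) wF R s m j.
Proof.
case=> hC hrep hmin.
rewrite -psiF0; apply/eqP; rewrite eq_le; apply/andP; split.
  by have := hmin _ (@psiC_Cplus s m) (@psiC_repr s m); rewrite l2sq_psiC sum_sq.
have HL := lower_id hrep.
have HS := sum_sq R s m.
set a := fun tau : 'I_m.+1 => complex.Re (phi tau%:Z) in HL *.
set b := fun tau : 'I_m.+1 => psiF R s m tau in HL HS.
have h0 : 0 <= \sum_(tau < m.+1) (a tau - b tau) ^+ 2 by apply: sumr_ge0 => tau _; apply: sqr_ge0.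
have ex : \sum_(tau < m.+1) (a tau - b tau) ^+ 2
   = \sum_(tau < m.+1) a tau ^+ 2 - 2 * \sum_(tau < m.+1) a tau * b tau + \sum_(tau < m.+1) b tau * b tau.
  rewrite mulr_sumr -sumrB -big_split /=; apply: eq_bigr => tau _; ring.
have la : \sum_(tau < m.+1) a tau ^+ 2 <= l2sq m phi.
  by apply: ler_sum => tau _; rewrite /a lerDl sqr_ge0.
rewrite /b in HL HS; rewrite HL HS in ex.
rewrite ex in h0; lra.
Qed.
End Cx.

Theorem proposition13 (R : realType) (s : nat) (phi : nat -> int -> R[i]) :
  (forall m : nat, (s <= m.+1)%N -> min_reproducing s m (phi m)) ->
  (fun m : nat => m%:R * l2sq m (phi m)) @ \oo --> ((s ^ 2)%N%:R : R).
Proof.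
move=> H.
apply/cvgrPdist_le => e e0.
have Kge : 0 <= (Kc s)%:R / e :> R by rewrite divr_ge0 ?ler0n // ltW.
have hN := archi_boundP Kge.
set N := Num.Def.archi_bound _ in hN.
exists (maxn s N); first by []. move=> m /= hm.
have := hm; rewrite geq_max => /andP [hsm hNm].
rewrite (l2sq_eq (H m (leq_trans hsm (leqnSn m)))).
apply: le_trans (u_bound R s m) _.
have mp : 0 < (m.+1)%:R :> R by rewrite ltr0n.
rewrite ler_pdivrMr //.
rewrite ltr_pdivrMr // in hN.
have : (N%:R : R) <= (m.+1)%:R by rewrite ler_nat ltnW.
move=> hNm'.
have h2 : N%:R * e <= (m.+1)%:R * e := ler_wpM2r (ltW e0) hNm'.
rewrite mulrC; exact: ltW (lt_le_trans hN h2).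
Qed.
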